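(* Let $N_1,N_2\ge1$ and $m_1\ge1$, $m_2\ge1$ be integers with $m_1+m_2<N_1N_2$. Let $A=A(N_1,N_2,m_1,m_2)$ be the set of $N_1\times N_2$ matrices $X=(x_{ij})$, $i\in\mathbb{Z}/N_1\mathbb{Z}$, $j\in\mathbb{Z}/N_2\mathbb{Z}$, having exactly $m_1$ entries equal to $1$, exactly $m_2$ entries equal to $2$, and all other entries equal to $0$. Define the unary operation $f:A\to A$ by $f(X)=Y(U(X))$, where: (i) $U(X)=(u_{ij})$ is obtained from $X$ by moving every entry $1$ one position to the right cyclically whenever the position to its right is $0$: namely $u_{ij}=1$ if ($x_{ij}=1$ and $x_{i,j+1}\neq 0$) or ($x_{ij}=0$ and $x_{i,j-1}=1$); $u_{ij}=2$ if $x_{ij}=2$; and $u_{ij}=0$ otherwise (indices $j\pm1$ modulo $N_2$); (ii) $Y(U)=(y_{ij})$ is obtained from $U$ by moving every entry $2$ from position $(i,j)$ to position $(i+1,j)$ (modulo $N_1$) whenever $u_{i+1,j}=0$: namely $y_{ij}=2$ if ($u_{ij}=2$ and $u_{i+1,j}\neq0$) or ($u_{ij}=0$ and $u_{i-1,j}=2$); $y_{ij}=1$ if $u_{ij}=1$; and $y_{ij}=0$ otherwise. Let $B\subseteq A$ be the set of matrices $X$ such that every entry $1$ of $X$ has a $0$ immediately to its right in $X$ (i.e. $x_{ij}=1\Rightarrow x_{i,j+1}=0$) and every entry $2$ of $U(X)$ has a $0$ at the next row position in $U(X)$ (i.e. $u_{ij}=2\Rightarrow u_{i+1,j}=0$).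 Let $f^1=f$, $f^t=f\circ f^{t-1}$, and let $C\subseteq A$ be the set of matrices $X$ for which there exists $t_0$ such that $f^t(X)\in B$ for all $t\ge t_0$. If the greatest common divisor of $N_1$ and $N_2$ is less than $3$, then no matrix belongs to $C$ (i.e. $C=\emptyset$).
   Context: Interpretation: $X\in A$ encodes a state of a deterministic Biham--Middleton--Levine type traffic system on an $N_1\times N_2$ torus, with $1$ = particle of the first type (moving along rows), $2$ = particle of the second type (moving along columns), $0$ = vacant cell; $f$ is one time step (first-type particles move, then second-type particles move); $B$ is the set of states in which every particle moves; $C$ is the set of states that eventually stay in free movement forever. *)

(* Defs.v *)
From mathcomp Require Import all_boot.
Set Implicit Arguments. Unset Strict Implicit. Unset Printing Implicit Defensive.

(* A state is an N1 x N2 grid of nats, rows indexed by 'I_N1 (= Z/N1Z),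
   columns by 'I_N2 (= Z/N2Z); cyclic successor/predecessor are ordS / ord_pred. *)
Definition grid (N1 N2 : nat) := 'I_N1 -> 'I_N2 -> nat.

Section BML.
Variables (N1 N2 m1 m2 : nat).

Definition count_val (X : grid N1 N2) (v : nat) : nat :=
  #|[set ij : 'I_N1 * 'I_N2 | X ij.1 ij.2 == v]|.

Definition inA (X : grid N1 N2) : Prop :=
  [/\ forall i j, X i j \in [:: 0; 1; 2],
      count_val X 1 = m1 & count_val X 2 = m2].

Definition Ustep (X : grid N1 N2) : grid N1 N2 := fun i j =>
  if ((X i j == 1) && (X i (ordS j) != 0)) || ((X i j == 0) && (X i (ord_pred j) == 1))
  then 1
  else if X i j == 2 then 2 else 0.

Definition Ystep (U : grid N1 N2) : grid N1 N2 := fun i j =>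
  if ((U i j == 2) && (U (ordS i) j != 0)) || ((U i j == 0) && (U (ord_pred i) j == 2))
  then 2
  else if U i j == 1 then 1 else 0.

Definition fstep (X : grid N1 N2) : grid N1 N2 := Ystep (Ustep X).

Definition inB (X : grid N1 N2) : Prop :=
  [/\ inA X,
      (forall i j, X i j = 1 -> X i (ordS j) = 0) &
      (forall i j, Ustep X i j = 2 -> Ustep X (ordS i) j = 0)].

Definition inC (X : grid N1 N2) : Prop :=
  inA X /\ exists t0 : nat, forall t, t0 <= t -> inB (iter t fstep X).

End BML.

(* Main.v *)
Require Import Defs.
From mathcomp Require Import all_boot zify ring.

Lemma crt (N1 N2 x y : nat) : 0 < N1 -> 0 < N2 ->
  x = y %[mod gcdn N1 N2] -> exists s, s = x %[mod N1] /\ s = y %[mod N2].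
Proof.
move=> h1 h2 hxy.
have [a _ ha] := Bezoutr N1 h2.
set g := gcdn N1 N2 in hxy ha *.
set X := x + (N2 - 1) * y.
have e1 : X + y = x + N2 * y by rewrite /X -addnA -{2}(mul1n y) -mulnDl subnK.
have hX : g %| X.
  have : X + y = 0 + y %[mod g].
    rewrite e1 -modnDmr. have /eqP -> : N2 * y %% g == 0.
      by rewrite -/(dvdn _ _) dvdn_mulr // dvdn_gcdr.
    by rewrite addn0 hxy.
  move/eqP; rewrite (eqn_modDr y X 0) mod0n => /eqP h; by rewrite /dvdn h.
set e := X %/ g.
exists (x + N1 * (a * e)); split.
  by rewrite -modnDmr mulnC modnMl addn0.
have key : x + N1 * (a * e) + X = x %[mod N2].
  have -> : X = e * g by rewrite /e divnK.
  have -> : x + N1 * (a * e) + e * g = x + e * (g + a * N1) by ring.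
  by rewrite -modnDmr; move/dvdnP: ha => [q ->]; rewrite mulnA modnMl addn0.
have key2 : x + N1 * (a * e) + X + y = x + y %[mod N2] by rewrite -modnDml key modnDml.
move: key2; rewrite -addnA e1 addnA -modnDmr modnMr addn0 => key2.
apply/eqP; rewrite -(eqn_modDr x) addnC; apply/eqP.
by rewrite [y + _]addnC -key2 addnC.

Qed.

Section S.
Variables (N1 N2 m1 m2 : nat).
Implicit Types Z : grid N1 N2.

Lemma u2 Z i j : Z i j = 2 -> Ustep Z i j = 2.
Proof. by move=> h; rewrite /Ustep h. Qed.

Lemma u1 Z i j : inB m1 m2 Z -> Z i j = 1 -> Ustep Z i (ordS j) = 1.
Proof.
move=> [_ hB1 _] h; rewrite /Ustep (hB1 _ _ h) ordSK h /=.
by [].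
Qed.

Lemma y1 (U : grid N1 N2) i j : U i j = 1 -> Ystep U i j = 1.
Proof. by move=> h; rewrite /Ystep h. Qed.

Lemma f1 Z i j : inB m1 m2 Z -> Z i j = 1 -> fstep Z i (ordS j) = 1.
Proof. by move=> hB h; apply: y1; apply: u1. Qed.

Lemma f2 Z i j : inB m1 m2 Z -> Z i j = 2 -> fstep Z (ordS i) j = 2.
Proof.
move=> hB h; have hu : Ustep Z i j = 2 by apply: u2. have [_ _ hB2] := hB.
by rewrite /fstep /Ystep (hB2 _ _ hu) ordSK hu.
Qed.

Lemma iter_ordS n (j : 'I_n) s : val (iter s (@ordS n) j) = (j + s) %% n.
Proof.
elim: s => [|s IH] /=; first by rewrite addn0 modn_small.
by rewrite IH addnS -[(j+s).+1]addn1 -(modnDml (j+s) 1) addn1.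
Qed.

End S.

Lemma pick_val (N1 N2 : nat) (Z : grid N1 N2) v : 0 < count_val Z v -> exists i j, Z i j = v.
Proof.
rewrite /count_val card_gt0 => /set0Pn [[i j]]; rewrite inE => /eqP h.
by exists i, j.
Qed.

Lemma modSm m n : (m %% n).+1 %% n = m.+1 %% n.
Proof. by rewrite -addn1 modnDml addn1. Qed.

Theorem theorem2 (N1 N2 m1 m2 : nat) :
  1 <= N1 -> 1 <= N2 -> 1 <= m1 -> 1 <= m2 -> m1 + m2 < N1 * N2 ->
  gcdn N1 N2 < 3 ->
  forall X : grid N1 N2, ~ inC m1 m2 X.
Proof.
move=> hN1 hN2 hm1 hm2 _ hg X [_ [t0 ht]].
have hB0 := ht t0 (leqnn _).
have [[_ c1 c2] _ _] := hB0.
have [a [b hab]] : exists i j, iter t0 (@fstep N1 N2) X i j = 1 by apply: pick_val; rewrite c1.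
have [c [d hcd]] : exists i j, iter t0 (@fstep N1 N2) X i j = 2 by apply: pick_val; rewrite c2.
have P1 : forall s, iter (t0 + s) (@fstep N1 N2) X a (iter s (@ordS _) b) = 1.
  elim=> [|s IH]; first by rewrite addn0.
  by rewrite addnS /=; apply: f1 => //; apply: ht; rewrite leq_addr.
have P2 : forall s, iter (t0 + s) (@fstep N1 N2) X (iter s (@ordS _) c) d = 2.
  elim=> [|s IH]; first by rewrite addn0.
  by rewrite addnS /=; apply: f2 => //; apply: ht; rewrite leq_addr.
set y := d + 2 * N2 - b - 1.
set x1 := a + N1 - c.
set x2 := a + 2 * N1 - c - 1.
have ltc : c < N1 := ltn_ord c.
have ltb : b < N2 := ltn_ord b.
have ha : a < N1 := ltn_ord a.
have hd : d < N2 := ltn_ord d.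
have hy : (b + (y %% N2)).+1 %% N2 = d.
  rewrite -addSn modnDmr.
  have -> : b.+1 + y = d + 2 * N2 by rewrite /y; clear -ltb hd; lia.
  by rewrite addnC modnMDl modn_small.
have hx1 : (c + (x1 %% N1)) %% N1 = a.
  rewrite modnDmr.
  have -> : c + x1 = a + 1 * N1 by rewrite /x1; clear -ltc ha; lia.
  by rewrite addnC modnMDl modn_small.
have hx2 : (c + (x2 %% N1)).+1 %% N1 = a.
  rewrite -addSn modnDmr.
  have -> : c.+1 + x2 = a + 2 * N1 by rewrite /x2; clear -ltc ha; lia.
  by rewrite addnC modnMDl modn_small.
have hcase : x1 = y %[mod gcdn N1 N2] \/ x2 = y %[mod gcdn N1 N2].
  have g0 : 0 < gcdn N1 N2 by rewrite gcdn_gt0 hN1.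
  have : (gcdn N1 N2 == 1) || (gcdn N1 N2 == 2) by move: g0 hg; clear; lia.
  case/orP=> /eqP hg'; rewrite hg'; first by rewrite !modn1; left.
  have : 2 %| N1 by rewrite -hg' dvdn_gcdl.
  case/dvdnP=> k hk.
  have -> : x2 = x1 + N1 - 1 by rewrite /x2 /x1; clear -ltc ha; lia.
  move: hk hN1; clear; lia.
case: hcase => /(@crt _ _ _ _ hN1 hN2) [s [hs1 hs2]].
- have hBs := ht (t0 + s) (leq_addr _ _).
  have [_ hB1 _] := hBs.
  have := hB1 _ _ (P1 s).
  have -> : @ordS N2 (iter s (@ordS _) b) = d.
    apply: val_inj => /=; by rewrite iter_ordS modSm -addSn -modnDmr hs2 addSn hy.
  have <- : iter s (@ordS _) c = a.
    apply: val_inj; by rewrite iter_ordS -modnDmr hs1 hx1.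
  by rewrite P2.
- have hBs := ht (t0 + s) (leq_addr _ _).
  have [_ _ hB2] := hBs.
  have h1 := @u1 _ _ _ _ _ _ _ hBs (P1 s).
  have h2 : Ustep (iter (t0 + s) (@fstep N1 N2) X) (iter s (@ordS _) c) d = 2 by apply: u2; apply: P2.
  have := hB2 _ _ h2.
  have -> : @ordS N1 (iter s (@ordS _) c) = a.
    apply: val_inj => /=; by rewrite iter_ordS modSm -addSn -modnDmr hs1 addSn hx2.
  have <- : @ordS N2 (iter s (@ordS _) b) = d.
    apply: val_inj => /=; by rewrite iter_ordS modSm -addSn -modnDmr hs2 addSn hy.
  by rewrite h1.
Qed.
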